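(* For integers $n,m,N,M$ with $n\ge N$ and $m\ge M$, \[ \sum_{r=N}^n\sum_{s=M}^m q^{n+m-r-s}\,\Phi_{n-r,m-s}\big(zq^{2r-s},wq^{2s-r};q\big)\,\Phi_{r-N,s-M}\big(zq^{2r-s},wq^{2s-r};q^{-1}\big)=\delta_{n,N}\delta_{m,M}. \]
   Context: For $n\in\mathbb{Z}$, $(a;q)_n=(a;q)_\infty/(aq^n;q)_\infty$ (finite product for $n\ge0$; $1/(q;q)_n=0$ for $n<0$), $(a_1,\dots,a_k;q)_n=\prod_i(a_i;q)_n$. For integers $n,m$, \[\Phi_{n,m}(z,w;q):=\frac{(zwq;q)_{n+m}}{(q,zq,zwq;q)_n\,(q,wq,zwq;q)_m},\] a rational function of $z,w,q$; $\Phi_{n,m}(z,w;q^{-1})$ denotes the same expression with $q$ replaced by $q^{-1}$. $\delta$ is the Kronecker delta. *)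

(* Defs.v *)
From HB Require Import structures.
From mathcomp Require Import all_boot all_order all_algebra.
Set Implicit Arguments. Unset Strict Implicit. Unset Printing Implicit Defensive.
Import Order.TTheory GRing.Theory Num.Theory.
Local Open Scope ring_scope.

Definition qpoch (F : fieldType) (a q : F) (n : nat) : F :=
  \prod_(i < n) (1 - a * q ^+ i).

(* Phi_{n,m}(z,w;q) for integers n, m; it is 0 if n < 0 or m < 0,
   following the convention 1/(q;q)_n = 0 for n < 0. *)
Definition Phi (F : fieldType) (n m : int) (z w q : F) : F :=
  if (0 <= n) && (0 <= m) then
    let n' := absz n in let m' := absz m in
    qpoch (z * w * q) q (n' + m')
    / (qpoch q q n' * qpoch (z * q) q n' * qpoch (z * w * q) q n'
       * qpoch q q m' * qpoch (w * q) q m' * qpoch (z * w * q) q m')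
  else 0.

Definition zsum (F : fieldType) (a b : int) (f : int -> F) : F :=
  if a <= b then \sum_(k < (absz (b - a)).+1) f (a + k%:Z) else 0.

(* Main.v *)
Require Import Defs.
From HB Require Import structures.
From mathcomp Require Import all_boot all_order all_algebra.
From mathcomp Require Import zify ring lra.
Import Order.TTheory GRing.Theory Num.Theory.
Local Open Scope ring_scope.
Set Implicit Arguments. Unset Strict Implicit. Unset Printing Implicit Defensive.

Section Basics.
Variable F : fieldType.

Lemma qpochS (x p : F) n : qpoch x p n.+1 = qpoch x p n * (1 - x * p ^+ n).
Proof. by rewrite /qpoch big_ord_recr. Qed.

Lemma qpoch0 (x p : F) : qpoch x p 0 = 1.
Proof. by rewrite /qpoch big_ord0. Qed.

Lemma qpochD (x p : F) m n : qpoch x p (m + n) = qpoch x p m * qpoch (x * p ^+ m) p n.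
Proof.
rewrite /qpoch big_split_ord /=; congr (_ * _).
by apply: eq_bigr => i _; rewrite -mulrA -exprD.
Qed.

Lemma qpoch_neq0 (x p : F) n : (forall i, (i < n)%N -> x * p ^+ i != 1) -> qpoch x p n != 0.
Proof.
move=> h; rewrite /qpoch; apply/prodf_neq0 => i _.
by rewrite subr_eq0 eq_sym h.
Qed.

Definition PhiN (n m : nat) (X Y p : F) :=
  qpoch (X * Y * p) p (n + m)
  / (qpoch p p n * qpoch (X * p) p n * qpoch (X * Y * p) p n
     * qpoch p p m * qpoch (Y * p) p m * qpoch (X * Y * p) p m).

Lemma PhiE n m (X Y p : F) : Phi n%:Z m%:Z X Y p = PhiN n m X Y p.
Proof. by rewrite /Phi /PhiN !le0z_nat /=. Qed.

Lemma PhiN00 (X Y p : F) : PhiN 0 0 X Y p = 1.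
Proof. by rewrite /PhiN addn0 !qpoch0 !mulr1 invr1 mulr1. Qed.

Lemma PhiN_Sl n m (X Y p : F) :
  qpoch p p n.+1 != 0 -> qpoch (X * p) p n.+1 != 0 -> qpoch (X * Y * p) p n.+1 != 0 ->
  qpoch p p m != 0 -> qpoch (Y * p) p m != 0 -> qpoch (X * Y * p) p m != 0 ->
  PhiN n.+1 m X Y p * ((1 - p * p ^+ n) * (1 - X * p * p ^+ n) * (1 - X * Y * p * p ^+ n))
  = PhiN n m X Y p * (1 - X * Y * p * p ^+ (n + m)).
Proof.
rewrite !qpochS => h1 h2 h3 h4 h5 h6.
move: h1 h2 h3; rewrite !mulf_eq0 !negb_or => /andP[h1 h1'] /andP[h2 h2'] /andP[h3 h3'].
rewrite /PhiN addSn qpochS !qpochS. field.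
by rewrite h1 h1' h2 h2' h3 h3' h4 h5 h6.
Qed.

Lemma PhiN_Sr n m (X Y p : F) :
  qpoch p p n != 0 -> qpoch (X * p) p n != 0 -> qpoch (X * Y * p) p n != 0 ->
  qpoch p p m.+1 != 0 -> qpoch (Y * p) p m.+1 != 0 -> qpoch (X * Y * p) p m.+1 != 0 ->
  PhiN n m.+1 X Y p * ((1 - p * p ^+ m) * (1 - Y * p * p ^+ m) * (1 - X * Y * p * p ^+ m))
  = PhiN n m X Y p * (1 - X * Y * p * p ^+ (n + m)).
Proof.
rewrite !qpochS => h1 h2 h3 h4 h5 h6.
move: h4 h5 h6; rewrite !mulf_eq0 !negb_or => /andP[h4 h4'] /andP[h5 h5'] /andP[h6 h6'].
rewrite /PhiN addnS qpochS !qpochS. field.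
by rewrite h1 h2 h3 h4 h4' h5 h5' h6 h6'.
Qed.
End Basics.

Section Q.
Variable F : fieldType.
Variable q : F.
Hypothesis hq0 : q != 0.
Hypothesis hq : forall k : nat, (0 < k)%N -> q ^+ k != 1.

Lemma qz_neq1 (j : int) : j != 0 -> q ^ j != 1.
Proof.
case: j => [n|n] hn.
  by rewrite -exprnP hq // lt0n; apply: contraNneq hn => ->.
by rewrite NegzE -exprz_inv -exprnP exprVn invr_eq1 hq.
Qed.

Lemma qz_neq1' (j : int) : j != 0 -> 1 - q ^ j != 0.
Proof. by move=> h; rewrite subr_eq0 eq_sym qz_neq1. Qed.

Definition gen (X : F) := forall j : int, X * q ^ j != 1.

Lemma gen1 X j : gen X -> 1 - X * q ^ j != 0.
Proof. by move=> h; rewrite subr_eq0 eq_sym h. Qed.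

Lemma qmul (x : F) (c d : int) : x * q ^ c * q ^ d = x * q ^ (c + d).
Proof. by rewrite -mulrA -expfzDr. Qed.
Lemma qmuln (x : F) (c : int) (n : nat) : x * q ^ c * q ^+ n = x * q ^ (c + n%:Z).
Proof. by rewrite exprnP qmul. Qed.
Lemma qmulin (x : F) (c : int) (n : nat) : x * q ^ c * q^-1 ^+ n = x * q ^ (c - n%:Z).
Proof. by rewrite exprnP exprz_inv qmul. Qed.
Lemma qmul1 (x : F) (c : int) : x * q ^ c * q = x * q ^ (c + 1).
Proof. by rewrite -qmul expr1z. Qed.
Lemma qmuli (x : F) (c : int) : x * q ^ c * q^-1 = x * q ^ (c - 1).
Proof. by rewrite -qmul exprN1. Qed.
Lemma qmulxy (x y : F) (c d : int) : x * q ^ c * (y * q ^ d) = x * y * q ^ (c + d).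
Proof. by rewrite expfzDr //; ring. Qed.
Lemma qx0 (x : F) : x = x * q ^ 0.
Proof. by rewrite expr0z mulr1. Qed.

Lemma gen_shift X c : gen X -> gen (X * q ^ c).
Proof. by move=> h j; rewrite qmul. Qed.

Lemma qpoch_gen_q x X c n : gen X -> x = X * q ^ c -> qpoch x q n != 0.
Proof. by move=> h -> ; apply: qpoch_neq0 => i _; rewrite qmuln. Qed.

Lemma qpoch_gen_qi x X c n : gen X -> x = X * q ^ c -> qpoch x q^-1 n != 0.
Proof. by move=> h -> ; apply: qpoch_neq0 => i _; rewrite qmulin. Qed.

Lemma qpoch_qq n : qpoch q q n != 0.
Proof.
apply: qpoch_neq0 => i _; rewrite -exprS; apply: hq; done.
Qed.

Lemma qpoch_qiqi n : qpoch q^-1 q^-1 n != 0.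
Proof.
apply: qpoch_neq0 => i _; rewrite -exprS exprVn invr_eq1; apply: hq; done.
Qed.

Definition Fs (a b : nat) (Z W : F) (k l : nat) :=
  PhiN (a - k) (b - l) (Z * q ^ (2 * a%:Z - b%:Z)) (W * q ^ (2 * b%:Z - a%:Z)) q^-1
  * q ^+ (k + l) * PhiN k l Z W q.

Definition r0 (a i : nat) := q * (1 - q ^ (i%:Z - a%:Z)) / (1 - q ^ (i%:Z + 1)).
Definition r1 (X : F) (d : int) (i : nat) := (1 - X * q ^ (d + i%:Z)) / (1 - X * q ^ (i%:Z + 1)).
Definition rho (a b : nat) (X P : F) (i : nat) := r0 a i * r1 X (a%:Z - b%:Z) i * r1 P b%:Z i.
Definition U (a b : nat) (X P : F) (k : nat) := \prod_(i < k) rho a b X P i.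

Lemma qx1 (x : F) : x * q = x * q ^ 1.
Proof. by rewrite expr1z. Qed.

Lemma SK a b Z W k l : gen Z -> gen W -> gen (Z * W) -> (k < a)%N -> (l <= b)%N ->
  Fs a b Z W k.+1 l * (1 - Z * W * q ^ (k%:Z + l%:Z))
  = Fs a b Z W k l * rho a b Z (Z * W) k * (1 - Z * W * q ^ (k%:Z + l%:Z + 1)).
Proof.
move=> gZ gW gP hk hl.
set n' := (a - k.+1)%N.
have ha : (a - k = n'.+1)%N by rewrite /n'; lia.
rewrite /Fs ha.
set Z1 := Z * q ^ (2 * a%:Z - b%:Z).
set W1 := W * q ^ (2 * b%:Z - a%:Z).
set m := (b - l)%N.
have eZ1 : Z1 * q^-1 = Z * q ^ (2 * a%:Z - b%:Z - 1) by rewrite /Z1 qmuli.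
have eP1 : Z1 * W1 * q^-1 = Z * W * q ^ (2 * a%:Z - b%:Z + (2 * b%:Z - a%:Z) - 1)
  by rewrite /Z1 /W1 qmulxy qmuli.
have eW1 : W1 * q^-1 = W * q ^ (2 * b%:Z - a%:Z - 1) by rewrite /W1 qmuli.
have I := @PhiN_Sl _ n' m Z1 W1 q^-1 (qpoch_qiqi _) (qpoch_gen_qi _ gZ eZ1)
  (qpoch_gen_qi _ gP eP1) (qpoch_qiqi _) (qpoch_gen_qi _ gW eW1) (qpoch_gen_qi _ gP eP1).
have II := @PhiN_Sl _ k l Z W q (qpoch_qq _) (qpoch_gen_q _ gZ (qx1 Z))
  (qpoch_gen_q _ gP (qx1 (Z * W))) (qpoch_qq _) (qpoch_gen_q _ gW (qx1 W))
  (qpoch_gen_q _ gP (qx1 (Z * W))).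
rewrite eZ1 eP1 !qmulin in I.
rewrite -exprS exprVn exprnN in I.
have I' : PhiN n'.+1 m Z1 W1 q^-1 * ((1 - q ^ (k%:Z - a%:Z)) * (1 - Z * q ^ (a%:Z - b%:Z + k%:Z))
   * (1 - Z * W * q ^ (b%:Z + k%:Z))) = PhiN n' m Z1 W1 q^-1 * (1 - Z * W * q ^ (k%:Z + l%:Z)).
  rewrite (_ : k%:Z - a%:Z = - (n'.+1)%:Z); last by rewrite /n'; lia.
  rewrite (_ : a%:Z - b%:Z + k%:Z = 2 * a%:Z - b%:Z - 1 - n'%:Z); last by rewrite /n'; lia.
  rewrite (_ : b%:Z + k%:Z = 2 * a%:Z - b%:Z + (2 * b%:Z - a%:Z) - 1 - n'%:Z); last by rewrite /n'; lia.
  rewrite (_ : k%:Z + l%:Z = 2 * a%:Z - b%:Z + (2 * b%:Z - a%:Z) - 1 - (n' + m)%N%:Z); last by rewrite /n' /m; lia.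
  exact: I.
have II' : PhiN k.+1 l Z W q * ((1 - q ^ (k%:Z + 1)) * (1 - Z * q ^ (k%:Z + 1))
   * (1 - Z * W * q ^ (k%:Z + 1))) = PhiN k l Z W q * (1 - Z * W * q ^ (k%:Z + l%:Z + 1)).
  have f1 : q * q ^+ k = q ^ (k%:Z + 1) by rewrite expfzDr // expr1z mulrC.
  have f2 : Z * q * q ^+ k = Z * q ^ (k%:Z + 1) by rewrite expfzDr // expr1z -exprnP; ring.
  have f3 : Z * W * q * q ^+ k = Z * W * q ^ (k%:Z + 1) by rewrite expfzDr // expr1z -exprnP; ring.
  have f4 : Z * W * q * q ^+ (k + l) = Z * W * q ^ (k%:Z + l%:Z + 1)
    by rewrite !expfzDr // expr1z -!exprnP exprD; ring.
  by rewrite -f4 -f3 -f2 -f1.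
rewrite -/n'.
have nN1 : 1 - Z * W * q ^ (k%:Z + l%:Z) != 0 by apply: gen1.
have nD1 : 1 - q ^ (k%:Z + 1) != 0 by apply: qz_neq1'; lia.
have nD2 : 1 - Z * q ^ (k%:Z + 1) != 0 by apply: gen1.
have nD3 : 1 - Z * W * q ^ (k%:Z + 1) != 0 by apply: gen1.
have hB : PhiN k.+1 l Z W q = PhiN k l Z W q * (1 - Z * W * q ^ (k%:Z + l%:Z + 1))
   / ((1 - q ^ (k%:Z + 1)) * (1 - Z * q ^ (k%:Z + 1)) * (1 - Z * W * q ^ (k%:Z + 1))).
  by rewrite -II'; field; rewrite nD1 nD2 nD3.
have hA : PhiN n' m Z1 W1 q^-1 = PhiN n'.+1 m Z1 W1 q^-1 * ((1 - q ^ (k%:Z - a%:Z)) * (1 - Z * q ^ (a%:Z - b%:Z + k%:Z))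
   * (1 - Z * W * q ^ (b%:Z + k%:Z))) / (1 - Z * W * q ^ (k%:Z + l%:Z)).
  by rewrite I'; field; rewrite nN1.
rewrite hA hB /rho /r0 /r1 addSn exprS.
field.
by rewrite nN1 nD1 nD2 nD3.
Qed.

Lemma SL a b Z W k l : gen Z -> gen W -> gen (Z * W) -> (k <= a)%N -> (l < b)%N ->
  Fs a b Z W k l.+1 * (1 - Z * W * q ^ (k%:Z + l%:Z))
  = Fs a b Z W k l * rho b a W (Z * W) l * (1 - Z * W * q ^ (k%:Z + l%:Z + 1)).
Proof.
move=> gZ gW gP hk hl.
set m' := (b - l.+1)%N.
have hb : (b - l = m'.+1)%N by rewrite /m'; lia.
rewrite /Fs hb -/m'.
set Z1 := Z * q ^ (2 * a%:Z - b%:Z).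
set W1 := W * q ^ (2 * b%:Z - a%:Z).
set n := (a - k)%N.
have eZ1 : Z1 * q^-1 = Z * q ^ (2 * a%:Z - b%:Z - 1) by rewrite /Z1 qmuli.
have eP1 : Z1 * W1 * q^-1 = Z * W * q ^ (2 * a%:Z - b%:Z + (2 * b%:Z - a%:Z) - 1)
  by rewrite /Z1 /W1 qmulxy qmuli.
have eW1 : W1 * q^-1 = W * q ^ (2 * b%:Z - a%:Z - 1) by rewrite /W1 qmuli.
have I := @PhiN_Sr _ n m' Z1 W1 q^-1 (qpoch_qiqi _) (qpoch_gen_qi _ gZ eZ1)
  (qpoch_gen_qi _ gP eP1) (qpoch_qiqi _) (qpoch_gen_qi _ gW eW1) (qpoch_gen_qi _ gP eP1).
have II := @PhiN_Sr _ k l Z W q (qpoch_qq _) (qpoch_gen_q _ gZ (qx1 Z))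
  (qpoch_gen_q _ gP (qx1 (Z * W))) (qpoch_qq _) (qpoch_gen_q _ gW (qx1 W))
  (qpoch_gen_q _ gP (qx1 (Z * W))).
rewrite eW1 eP1 !qmulin in I.
rewrite -exprS exprVn exprnN in I.
have I' : PhiN n m'.+1 Z1 W1 q^-1 * ((1 - q ^ (l%:Z - b%:Z)) * (1 - W * q ^ (b%:Z - a%:Z + l%:Z))
   * (1 - Z * W * q ^ (a%:Z + l%:Z))) = PhiN n m' Z1 W1 q^-1 * (1 - Z * W * q ^ (k%:Z + l%:Z)).
  rewrite (_ : l%:Z - b%:Z = - (m'.+1)%:Z); last by rewrite /m'; lia.
  rewrite (_ : b%:Z - a%:Z + l%:Z = 2 * b%:Z - a%:Z - 1 - m'%:Z); last by rewrite /m'; lia.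
  rewrite (_ : a%:Z + l%:Z = 2 * a%:Z - b%:Z + (2 * b%:Z - a%:Z) - 1 - m'%:Z); last by rewrite /m'; lia.
  rewrite (_ : k%:Z + l%:Z = 2 * a%:Z - b%:Z + (2 * b%:Z - a%:Z) - 1 - (n + m')%N%:Z); last by rewrite /n /m'; lia.
  exact: I.
have II' : PhiN k l.+1 Z W q * ((1 - q ^ (l%:Z + 1)) * (1 - W * q ^ (l%:Z + 1))
   * (1 - Z * W * q ^ (l%:Z + 1))) = PhiN k l Z W q * (1 - Z * W * q ^ (k%:Z + l%:Z + 1)).
  have f1 : q * q ^+ l = q ^ (l%:Z + 1) by rewrite expfzDr // expr1z mulrC.
  have f2 : W * q * q ^+ l = W * q ^ (l%:Z + 1) by rewrite expfzDr // expr1z -exprnP; ring.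
  have f3 : Z * W * q * q ^+ l = Z * W * q ^ (l%:Z + 1) by rewrite expfzDr // expr1z -exprnP; ring.
  have f4 : Z * W * q * q ^+ (k + l) = Z * W * q ^ (k%:Z + l%:Z + 1)
    by rewrite !expfzDr // expr1z -!exprnP exprD; ring.
  by rewrite -f4 -f3 -f2 -f1.
have nN1 : 1 - Z * W * q ^ (k%:Z + l%:Z) != 0 by apply: gen1.
have nD1 : 1 - q ^ (l%:Z + 1) != 0 by apply: qz_neq1'; lia.
have nD2 : 1 - W * q ^ (l%:Z + 1) != 0 by apply: gen1.
have nD3 : 1 - Z * W * q ^ (l%:Z + 1) != 0 by apply: gen1.
have hB : PhiN k l.+1 Z W q = PhiN k l Z W q * (1 - Z * W * q ^ (k%:Z + l%:Z + 1))
   / ((1 - q ^ (l%:Z + 1)) * (1 - W * q ^ (l%:Z + 1)) * (1 - Z * W * q ^ (l%:Z + 1))).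
  by rewrite -II'; field; rewrite nD1 nD2 nD3.
have hA : PhiN n m' Z1 W1 q^-1 = PhiN n m'.+1 Z1 W1 q^-1 * ((1 - q ^ (l%:Z - b%:Z)) * (1 - W * q ^ (b%:Z - a%:Z + l%:Z))
   * (1 - Z * W * q ^ (a%:Z + l%:Z))) / (1 - Z * W * q ^ (k%:Z + l%:Z)).
  by rewrite I'; field; rewrite nN1.
rewrite hA hB /rho /r0 /r1 addnS exprS.
field.
by rewrite nN1 nD1 nD2 nD3.
Qed.

Lemma Ffact0 a b Z W k : gen Z -> gen W -> gen (Z * W) -> (k <= a)%N ->
  Fs a b Z W k 0 * (1 - Z * W)
  = Fs a b Z W 0 0 * U a b Z (Z * W) k * U b a W (Z * W) 0 * (1 - Z * W * q ^ (k%:Z + 0)).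
Proof.
move=> gZ gW gP; elim: k => [|k IH] hk.
  by rewrite /U !big_ord0 addr0 expr0z !mulr1.
have hS := SK gZ gW gP hk (leq0n b).
have nD : 1 - Z * W * q ^ (k%:Z + 0%:Z) != 0 by apply: gen1.
have -> : Fs a b Z W k.+1 0 = Fs a b Z W k 0 * rho a b Z (Z * W) k
   * (1 - Z * W * q ^ (k%:Z + 0%:Z + 1)) / (1 - Z * W * q ^ (k%:Z + 0%:Z)).
  by rewrite -hS; field.
rewrite (_ : Fs a b Z W k 0 * rho a b Z (Z * W) k * (1 - Z * W * q ^ (k%:Z + 0%:Z + 1))
   / (1 - Z * W * q ^ (k%:Z + 0%:Z)) * (1 - Z * W)
   = Fs a b Z W k 0 * (1 - Z * W) * rho a b Z (Z * W) k * (1 - Z * W * q ^ (k%:Z + 0%:Z + 1))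
   / (1 - Z * W * q ^ (k%:Z + 0%:Z))); last by field.
rewrite IH; last by apply: ltnW.
rewrite /U big_ord_recr /= (_ : (k.+1)%:Z + 0 = k%:Z + 0%:Z + 1); last by lia.
by field.
Qed.

Lemma Ffact a b Z W k l : gen Z -> gen W -> gen (Z * W) -> (k <= a)%N -> (l <= b)%N ->
  Fs a b Z W k l * (1 - Z * W)
  = Fs a b Z W 0 0 * U a b Z (Z * W) k * U b a W (Z * W) l * (1 - Z * W * q ^ (k%:Z + l%:Z)).
Proof.
move=> gZ gW gP hk; elim: l => [|l IH] hl; first exact: Ffact0.
have hS := SL gZ gW gP hk hl.
have nD : 1 - Z * W * q ^ (k%:Z + l%:Z) != 0 by apply: gen1.
have -> : Fs a b Z W k l.+1 = Fs a b Z W k l * rho b a W (Z * W) l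
   * (1 - Z * W * q ^ (k%:Z + l%:Z + 1)) / (1 - Z * W * q ^ (k%:Z + l%:Z)).
  by rewrite -hS; field.
rewrite (_ : Fs a b Z W k l * rho b a W (Z * W) l * (1 - Z * W * q ^ (k%:Z + l%:Z + 1))
   / (1 - Z * W * q ^ (k%:Z + l%:Z)) * (1 - Z * W)
   = Fs a b Z W k l * (1 - Z * W) * rho b a W (Z * W) l * (1 - Z * W * q ^ (k%:Z + l%:Z + 1))
   / (1 - Z * W * q ^ (k%:Z + l%:Z))); last by field.
rewrite IH; last by apply: ltnW.
rewrite /U big_ord_recr /= (_ : k%:Z + (l.+1)%:Z = k%:Z + l%:Z + 1); last by lia.
by field.
Qed.

Definition Qp (a : nat) : {poly F} := \prod_(i < a) (1 - (q ^+ i)%:P * 'X).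
Definition Qs (a : nat) : {poly F} := \prod_(i < a) (1 - (q ^+ i.+1)%:P * 'X).
Definition ee a k := (Qp a)`_k.

Lemma coef_lin (p : {poly F}) c k :
  (p * (1 - c%:P * 'X))`_k = p`_k - (if k is k'.+1 then c * p`_k' else 0).
Proof.
rewrite mulrBr mulr1 coefB mulrA coefMX; case: k => [|k] /=; first by [].
by rewrite coefMC mulrC.
Qed.

Lemma size_lin (c : F) : (size ((1 - c%:P * 'X)%R : {poly F}) <= 2)%N.
Proof.
apply: leq_trans (size_polyD _ _) _; rewrite size_polyN geq_max size_poly1 /=.
apply: leq_trans (size_polyMleq _ _) _; rewrite size_polyX.
have := size_polyC_leq1 c; lia.
Qed.

Lemma size_Qp a : (size (Qp a) <= a.+1)%N.
Proof.
elim: a => [|a IH]; first by rewrite /Qp big_ord0 size_poly1.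
rewrite /Qp big_ord_recr /= -/(Qp a); apply: leq_trans (size_polyMleq _ _) _.
have := size_lin (q ^+ a); move: IH; lia.
Qed.

Lemma Qs_coef a k : (Qs a)`_k = q ^+ k * ee a k.
Proof.
rewrite /ee; elim: a k => [|a IH] k.
  rewrite /Qs /Qp !big_ord0 coef1; case: k => [|k] /=; first by rewrite expr0 mul1r.
  by rewrite mulr0.
rewrite /Qs /Qp !big_ord_recr /= !coef_lin -/(Qs a) -/(Qp a) IH.
case: k => [|k]; first by rewrite !subr0.
by rewrite IH !exprS; ring.
Qed.

Lemma Qp_rec2 a : Qp a.+1 = (1 - 'X) * Qs a.
Proof.
rewrite /Qp big_ord_recl /= expr0 polyC1 mul1r; congr (_ * _).
Qed.

Lemma ee_ratio a k : ee a k.+1 * (q ^+ k.+1 - 1) = (q ^+ k - q ^+ a) * ee a k.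
Proof.
have h := congr1 (fun p : {poly F} => p`_k.+1) (Qp_rec2 a).
rewrite /= {1}/Qp big_ord_recr /= coef_lin -/(Qp a) in h.
rewrite mulrBl mul1r coefB coefXM /= !Qs_coef in h.
rewrite /ee; apply/eqP; rewrite -subr_eq0.
have -> : (Qp a)`_k.+1 * (q ^+ k.+1 - 1) - (q ^+ k - q ^+ a) * (Qp a)`_k
  = (q ^+ k.+1 * (Qp a)`_k.+1 - q ^+ k * (Qp a)`_k)
    - ((Qp a)`_k.+1 - q ^+ a * (Qp a)`_k) by ring.
by rewrite -h /ee subrr.
Qed.

Lemma Qp_horner a y : (Qp a).[y] = \prod_(i < a) (1 - q ^+ i * y).
Proof. by rewrite /Qp horner_prod; apply: eq_bigr => i _; rewrite !hornerE. Qed.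

Lemma ee0 a : ee a 0 = 1.
Proof. by rewrite /ee -horner_coef0 Qp_horner; apply: big1 => i _; rewrite mulr0 subr0. Qed.

Definition om a k := \prod_(i < k) r0 a i.

Lemma om_ee a k : om a k = ee a k * (q ^ (1 - a%:Z)) ^+ k.
Proof.
elim: k => [|k IH]; first by rewrite /om big_ord0 ee0 expr0 mulr1.
rewrite /om big_ord_recr /= -/(om a k) IH /r0.
have nk : q ^+ k.+1 - 1 != 0 by rewrite subr_eq0 hq.
have ha : q ^+ a != 0 by rewrite expf_neq0.
have -> : ee a k.+1 = (q ^+ k - q ^+ a) * ee a k / (q ^+ k.+1 - 1).
  by rewrite -ee_ratio; field.
rewrite (_ : q ^ (k%:Z - a%:Z) = q ^+ k / q ^+ a); last by rewrite expfzDr // -exprnN.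
rewrite (_ : q ^ (k%:Z + 1) = q ^+ k.+1); last by rewrite expfzDr // expr1z -exprnP exprSr.
rewrite (_ : q ^ (1 - a%:Z) = q / q ^+ a); last by rewrite expfzDr // -exprnN expr1z.
have nk' : 1 - q ^+ k.+1 != 0 by rewrite subr_eq0 eq_sym hq.
rewrite [(q / q ^+ a) ^+ k.+1]exprS.
set t := (q / q ^+ a) ^+ k.
rewrite exprS.
set u := q ^+ k.
field.
by rewrite /u -exprS ha nk nk'.
Qed.

Lemma orth0 a j : (j < a)%N -> \sum_(k < a.+1) om a k * (q ^+ j) ^+ k = 0.
Proof.
move=> hj.
rewrite (eq_bigr (fun k : 'I_a.+1 => (Qp a)`_k * (q ^ (1 - a%:Z) * q ^+ j) ^+ k)); last first.
  by move=> k _; rewrite om_ee -mulrA -exprMn.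
rewrite -horner_coef_wide ?size_Qp // Qp_horner.
apply/eqP; rewrite prodf_seq_eq0; apply/hasP.
have hi : (a - 1 - j < a)%N by lia.
exists (Ordinal hi); first by rewrite mem_index_enum.
rewrite /= subr_eq0 eq_sym !exprnP mulrA -!expfzDr //.
rewrite (_ : (a - 1 - j)%N%:Z + (1 - a%:Z) + j%:Z = 0) //; lia.
Qed.

Lemma orth_seq a (s : seq F) j : (j + size s < a)%N ->
  \sum_(k < a.+1) om a k * (q ^+ j) ^+ k * \prod_(x <- s) (1 - x * q ^+ k) = 0.
Proof.
elim: s j => [|x s IH] j hj.
  by under eq_bigr do rewrite big_nil mulr1; apply: orth0; move: hj => /=; lia.
have -> : \sum_(k < a.+1) om a k * (q ^+ j) ^+ k * \prod_(y <- x :: s) (1 - y * q ^+ k)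
  = \sum_(k < a.+1) om a k * (q ^+ j) ^+ k * \prod_(y <- s) (1 - y * q ^+ k)
    - x * \sum_(k < a.+1) om a k * (q ^+ j.+1) ^+ k * \prod_(y <- s) (1 - y * q ^+ k).
  rewrite mulr_sumr -sumrB; apply: eq_bigr => k _.
  by rewrite big_cons exprS exprMn; ring.
rewrite IH; last by move: hj => /=; lia.
by rewrite IH ?mulr0 ?subr0 //; move: hj => /=; lia.
Qed.

Definition sq (X : F) (d : nat) := [seq X * q ^ (i%:Z + 1) | i <- iota 0 d].

Lemma size_sq X d : size (sq X d) = d.
Proof. by rewrite /sq size_map size_iota. Qed.

Lemma prod_iota (G : nat -> F) d : \prod_(i <- iota 0 d) G i = \prod_(i < d) G i.
Proof. by rewrite -(big_mkord xpredT) /index_iota subn0. Qed.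

Lemma qpoch_Xq_neq0 X n : gen X -> qpoch (X * q) q n != 0.
Proof. by move=> gX; apply: (qpoch_gen_q _ gX (qx1 X)). Qed.

Lemma A_poly X d k : gen X ->
  \prod_(i < k) r1 X (d.+1)%:Z i = (\prod_(x <- sq X d) (1 - x * q ^+ k)) / qpoch (X * q) q d.
Proof.
move=> gX.
have e1 : \prod_(i < k) r1 X (d.+1)%:Z i = qpoch (X * q * q ^+ d) q k / qpoch (X * q) q k.
  rewrite /r1 prodf_div /qpoch; congr (_ / _); apply: eq_bigr => i _.
    by rewrite qx1 !qmuln; congr (1 - X * q ^ _); lia.
  by rewrite qx1 !qmuln; congr (1 - X * q ^ _); lia.
have e2 : \prod_(x <- sq X d) (1 - x * q ^+ k) = qpoch (X * q * q ^+ k) q d.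
  rewrite /sq big_map prod_iota /qpoch; apply: eq_bigr => i _.
  by rewrite qx1 !qmuln; congr (1 - X * q ^ _); lia.
have e3 : qpoch (X * q * q ^+ d) q k * qpoch (X * q) q d
        = qpoch (X * q) q k * qpoch (X * q * q ^+ k) q d.
  by rewrite mulrC -qpochD addnC qpochD.
rewrite e1 e2.
have n1 := qpoch_Xq_neq0 k gX.
have n2 := qpoch_Xq_neq0 d gX.
apply/eqP; rewrite eqr_div // e3 mulrC //.
Qed.

Lemma A_tel X k : gen X -> \prod_(i < k) r1 X 0 i * (1 - X * q ^+ k) = 1 - X.
Proof.
move=> gX; elim: k => [|k IH]; first by rewrite big_ord0 mul1r expr0 mulr1.
rewrite big_ord_recr /= /r1 add0r -exprnP.
rewrite (_ : q ^ (k%:Z + 1) = q ^+ k.+1); last by rewrite expfzDr // expr1z -exprnP exprSr.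
have nz : 1 - X * q ^+ k.+1 != 0 by rewrite exprnP gen1.
rewrite -IH; field; by rewrite nz.
Qed.

Lemma U_split a b X P k :
  U a b X P k = om a k * \prod_(i < k) r1 X (a%:Z - b%:Z) i * \prod_(i < k) r1 P b%:Z i.
Proof. by rewrite /U /rho /om !big_split. Qed.

Lemma VanA a b X P c : gen X -> gen P -> (0 < b)%N -> (b < a)%N ->
  \sum_(k < a.+1) U a b X P k * (1 - c * q ^+ k) = 0.
Proof.
move=> gX gP hb hba.
have eZ : a%:Z - b%:Z = ((a - b).-1.+1)%:Z by lia.
have eP : b%:Z = (b.-1.+1)%:Z by lia.
set d1 := (a - b).-1; set d2 := b.-1.
have key : forall k, U a b X P k * (1 - c * q ^+ k)
  = om a k * (q ^+ 0) ^+ k * \prod_(x <- sq X d1 ++ sq P d2 ++ [:: c]) (1 - x * q ^+ k)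
    / (qpoch (X * q) q d1 * qpoch (P * q) q d2).
  move=> k; rewrite U_split eZ eP !A_poly // !big_cat big_seq1 /= expr1n mulr1.
  have n1 := qpoch_Xq_neq0 d1 gX; have n2 := qpoch_Xq_neq0 d2 gP.
  by field; rewrite n1 n2.
under eq_bigr => k _ do rewrite key.
rewrite -mulr_suml orth_seq ?mul0r //.
rewrite !size_cat !size_sq /=; lia.
Qed.

Lemma VanA0 a X P : gen X -> gen P -> (0 < a)%N ->
  \sum_(k < a.+1) U a 0 X P k * (1 - P * q ^+ k) = 0.
Proof.
move=> gX gP ha.
have eZ : a%:Z - 0%:Z = (a.-1.+1)%:Z by lia.
set d1 := a.-1.
have key : forall k, U a 0 X P k * (1 - P * q ^+ k)
  = om a k * (q ^+ 0) ^+ k * \prod_(x <- sq X d1) (1 - x * q ^+ k)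
    * ((1 - P) / qpoch (X * q) q d1).
  move=> k; rewrite U_split eZ A_poly //.
  have t := A_tel k gP.
  rewrite -t expr1n mulr1.
  have n1 := qpoch_Xq_neq0 d1 gX.
  by field; rewrite n1.
under eq_bigr => k _ do rewrite key.
rewrite -mulr_suml orth_seq ?mul0r //.
rewrite size_sq /=; lia.
Qed.

Lemma VanAeq a X P : gen X -> gen P -> (0 < a)%N ->
  \sum_(k < a.+1) U a a X P k * (1 - X * q ^+ k) = 0.
Proof.
move=> gX gP ha.
have eP : a%:Z = (a.-1.+1)%:Z by lia.
set d2 := a.-1.
have key : forall k, U a a X P k * (1 - X * q ^+ k)
  = om a k * (q ^+ 0) ^+ k * \prod_(x <- sq P d2) (1 - x * q ^+ k)
    * ((1 - X) / qpoch (P * q) q d2).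
  move=> k; rewrite U_split subrr eP A_poly //.
  have t := A_tel k gX.
  rewrite -t expr1n mulr1.
  have n1 := qpoch_Xq_neq0 d2 gP.
  by field; rewrite n1.
under eq_bigr => k _ do rewrite key.
rewrite -mulr_suml orth_seq ?mul0r //.
rewrite size_sq /=; lia.
Qed.

Lemma sum2 (u v : nat -> F) (P : F) a b :
  \sum_(k < a.+1) \sum_(l < b.+1) u k * v l * (1 - P * (q ^+ k * q ^+ l))
  = (\sum_(k < a.+1) u k) * (\sum_(l < b.+1) v l)
    - P * ((\sum_(k < a.+1) u k * q ^+ k) * (\sum_(l < b.+1) v l * q ^+ l)).
Proof.
have E1 : (\sum_(k < a.+1) u k) * (\sum_(l < b.+1) v l)
   = \sum_(k < a.+1) \sum_(l < b.+1) u k * v l.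
  by rewrite mulr_suml; apply: eq_bigr => k _; rewrite mulr_sumr.
have E2 : (\sum_(k < a.+1) u k * q ^+ k) * (\sum_(l < b.+1) v l * q ^+ l)
   = \sum_(k < a.+1) \sum_(l < b.+1) (u k * q ^+ k) * (v l * q ^+ l).
  by rewrite mulr_suml; apply: eq_bigr => k _; rewrite mulr_sumr.
rewrite E1 E2 mulr_sumr -sumrB; apply: eq_bigr => k _.
rewrite mulr_sumr -sumrB; apply: eq_bigr => l _; ring.
Qed.

Lemma sum_lin (u : nat -> F) c a :
  \sum_(k < a.+1) u k * (1 - c * q ^+ k) = \sum_(k < a.+1) u k - c * \sum_(k < a.+1) u k * q ^+ k.
Proof. by rewrite mulr_sumr -sumrB; apply: eq_bigr => k _; ring. Qed.

Lemma U0 a b X P : U a b X P 0 = 1.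
Proof. by rewrite /U big_ord0. Qed.

Lemma CORE a b Z W : gen Z -> gen W -> gen (Z * W) ->
  \sum_(k < a.+1) \sum_(l < b.+1) Fs a b Z W k l = ((a == 0%N) && (b == 0%N))%:R.
Proof.
move=> gZ gW gP.
have [/andP[/eqP ha /eqP hb]|hne] := boolP ((a == 0%N) && (b == 0%N)).
  subst a b; rewrite !big_ord1 /Fs /= PhiN00 expr0 !mulr1.
  exact: PhiN00.

have nP : 1 - Z * W != 0 by move: (gen1 0 gP); rewrite expr0z mulr1.
set C := Fs a b Z W 0 0 / (1 - Z * W).
set uA := U a b Z (Z * W); set uB := U b a W (Z * W).
have -> : \sum_(k < a.+1) \sum_(l < b.+1) Fs a b Z W k l
   = C * \sum_(k < a.+1) \sum_(l < b.+1) uA k * uB l * (1 - Z * W * (q ^+ k * q ^+ l)).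
  rewrite mulr_sumr; apply: eq_bigr => k _; rewrite mulr_sumr; apply: eq_bigr => l _.
  have hk : (k <= a)%N by rewrite -ltnS.
  have hl : (l <= b)%N by rewrite -ltnS.
  have := Ffact gZ gW gP hk hl.
  rewrite expfzDr // -!exprnP => h.
  rewrite /C /uA /uB; apply: (mulIf nP); rewrite h; field; by rewrite nP.
rewrite sum2.
suff -> : (\sum_(k < a.+1) uA k) * (\sum_(l < b.+1) uB l) - Z * W *
    ((\sum_(k < a.+1) uA k * q ^+ k) * (\sum_(l < b.+1) uB l * q ^+ l)) = 0 by rewrite mulr0.
have vanB : (0 < a)%N -> (a < b)%N ->
    \sum_(l < b.+1) uB l = 0 /\ \sum_(l < b.+1) uB l * q ^+ l = 0.
  move=> h1 h2.
  have h0 := VanA 0 gW gP h1 h2; have h3 := VanA 1 gW gP h1 h2.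
  rewrite sum_lin -/uB in h0; rewrite sum_lin -/uB in h3.
  rewrite mul0r subr0 in h0; rewrite h0 mul1r sub0r in h3.
  by split => //; apply/eqP; rewrite -oppr_eq0 h3.
have vanA : (0 < b)%N -> (b < a)%N ->
    \sum_(k < a.+1) uA k = 0 /\ \sum_(k < a.+1) uA k * q ^+ k = 0.
  move=> h1 h2.
  have h0 := VanA 0 gZ gP h1 h2; have h3 := VanA 1 gZ gP h1 h2.
  rewrite sum_lin -/uA in h0; rewrite sum_lin -/uA in h3.
  rewrite mul0r subr0 in h0; rewrite h0 mul1r sub0r in h3.
  by split => //; apply/eqP; rewrite -oppr_eq0 h3.
case: (ltngtP a b) => hab.
- case: (posnP a) => ha.
  + subst a; rewrite !big_ord1 /uA U0 expr0 !mul1r.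
    have := VanA0 gW gP hab.
    by rewrite sum_lin.
  + by have [-> ->] := vanB ha hab; ring.
- case: (posnP b) => hb.
  + subst b; rewrite !big_ord1 /uB U0 expr0 !mulr1.
    have := VanA0 gZ gP hab.
    by rewrite sum_lin.
  + by have [-> ->] := vanA hb hab; ring.
- subst b.
  have ha : (0 < a)%N by move: hne; rewrite andbb lt0n.
  have h1 := VanAeq gZ gP ha; have h2 := VanAeq gW gP ha.
  rewrite sum_lin -/uA in h1; rewrite sum_lin -/uB in h2.
  move/eqP: h1; rewrite subr_eq0 => /eqP ->.
  move/eqP: h2; rewrite subr_eq0 => /eqP ->.
  ring.
Qed.

Lemma shift_sum (G : nat -> F) a lo hi : (lo <= hi)%N -> (hi <= a)%N ->
  (forall k, (k < lo)%N -> G k = 0) -> (forall k, (hi < k)%N -> G k = 0) ->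
  \sum_(k < a.+1) G k = \sum_(k < (hi - lo).+1) G (lo + k).
Proof.
move=> h1 h2 hlo hhi.
rewrite -(big_mkord xpredT) (@big_cat_nat _ _ _ lo 0 a.+1) //; last by lia.
rewrite (@big_cat_nat _ _ _ hi.+1 lo a.+1); [|lia|lia].
have z1 : \sum_(0 <= k < lo) G k = 0.
  by rewrite big_nat_cond big1 // => k /andP[/andP[_ hk] _]; exact: hlo.
have z2 : \sum_(hi.+1 <= k < a.+1) G k = 0.
  by rewrite big_nat_cond big1 // => k /andP[/andP[hk _] _]; exact: hhi.
rewrite z1 z2 /= add0r addr0 -{1}(add0n lo) big_addn big_mkord.
rewrite (_ : (hi.+1 - lo = (hi - lo).+1)%N); last by lia.
by apply: eq_bigr => k _; rewrite addnC.
Qed.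

Lemma Phi_negl (n m : int) (X Y p : F) : n < 0 -> Phi n m X Y p = 0.
Proof. by move=> h; rewrite /Phi leNgt h. Qed.

Lemma Phi_negr (n m : int) (X Y p : F) : m < 0 -> Phi n m X Y p = 0.
Proof. by move=> h; rewrite /Phi (leNgt 0 m) h andbF. Qed.

Definition An (z0 w0 : F) (i j k l : nat) :=
  q ^ ((i + j)%N%:Z - (k + l)%N%:Z)
  * Phi (i%:Z - k%:Z) (j%:Z - l%:Z) (z0 * q ^ (2 * k%:Z - l%:Z)) (w0 * q ^ (2 * l%:Z - k%:Z)) q.
Definition Bn (z0 w0 : F) (i j k l : nat) :=
  Phi (i%:Z - k%:Z) (j%:Z - l%:Z) (z0 * q ^ (2 * i%:Z - j%:Z)) (w0 * q ^ (2 * j%:Z - i%:Z)) q^-1.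

Lemma BAn z0 w0 a b i j i' j' : gen z0 -> gen w0 -> gen (z0 * w0) ->
  (i <= a)%N -> (j <= b)%N ->
  \sum_(k < a.+1) \sum_(l < b.+1) Bn z0 w0 i j k l * An z0 w0 k l i' j'
  = ((i == i') && (j == j'))%:R.
Proof.
move=> gz gw gzw ha hb.
case: (boolP ((i' <= i) && (j' <= j))%N) => [/andP[hi hj]|hn]; last first.
  rewrite (_ : ((i == i') && (j == j')) = false); last first.
    apply/negbTE; apply: contra hn => /andP[/eqP -> /eqP ->]; by rewrite !leqnn.
  apply: big1 => k _; apply: big1 => l _.
  rewrite /Bn /An.
  move: hn; rewrite negb_and -!ltnNge => /orP[h|h].
    case: (leqP k i) => hk.
      by rewrite [Phi (k%:Z - _) _ _ _ _]Phi_negl ?mulr0 //; lia.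
    by rewrite Phi_negl ?mul0r //; lia.
  case: (leqP l j) => hl.
    by rewrite [Phi (k%:Z - _) _ _ _ _]Phi_negr ?mulr0 //; lia.
  by rewrite Phi_negr ?mul0r //; lia.
set Z := z0 * q ^ (2 * i'%:Z - j'%:Z).
set W := w0 * q ^ (2 * j'%:Z - i'%:Z).
have gZ : gen Z by apply: gen_shift.
have gW : gen W by apply: gen_shift.
have gZW : gen (Z * W) by rewrite /Z /W qmulxy; apply: gen_shift.
rewrite (@shift_sum (fun k => \sum_(l < b.+1) Bn z0 w0 i j k l * An z0 w0 k l i' j') _ _ _ hi ha); last first.
- move=> k hk; apply: big1 => l _; rewrite /Bn Phi_negl ?mul0r //; lia.
- move=> k hk; apply: big1 => l _; rewrite /An Phi_negl ?mulr0 //; lia.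
rewrite (_ : ((i == i') && (j == j')) = ((i - i' == 0)%N && (j - j' == 0)%N)); last first.
  by rewrite !subn_eq0 !eqn_leq hi hj !andbT.
rewrite -(CORE (i - i') (j - j') gZ gW gZW).
apply: eq_bigr => k _.
rewrite (@shift_sum (fun l => Bn z0 w0 i j (i' + k) l * An z0 w0 (i' + k) l i' j') _ _ _ hj hb); last first.
- move=> l hl; rewrite /Bn Phi_negr ?mul0r //; lia.
- move=> l hl; rewrite /An Phi_negr ?mulr0 //; lia.
apply: eq_bigr => l _.
have hk : (k <= i - i')%N by rewrite -ltnS.
have hl : (l <= j - j')%N by rewrite -ltnS.
rewrite /Bn /An /Fs.
rewrite (_ : i%:Z - (i' + k)%N%:Z = (i - i' - k)%N%:Z); last by lia.
rewrite (_ : j%:Z - (j' + l)%N%:Z = (j - j' - l)%N%:Z); last by lia.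
rewrite (_ : (i' + k)%N%:Z - i'%:Z = k%:Z); last by lia.
rewrite (_ : (j' + l)%N%:Z - j'%:Z = l%:Z); last by lia.
rewrite !PhiE mulrA; congr (PhiN _ _ _ _ _ * _ * PhiN _ _ _ _ _).
- by rewrite /Z qmul; congr (_ * q ^ _); lia.
- by rewrite /W qmul; congr (_ * q ^ _); lia.
- by rewrite exprnP; congr (q ^ _); lia.
Qed.

Lemma sum_enum a b (H : 'I_a.+1 * 'I_b.+1 -> F) :
  \sum_(w < #|{: 'I_a.+1 * 'I_b.+1}|) H (enum_val w) = \sum_(k < a.+1) \sum_(l < b.+1) H (k, l).
Proof.
rewrite pair_bigA /=.
rewrite (reindex (@enum_val _ {: 'I_a.+1 * 'I_b.+1})) /=; last first.
  by exists enum_rank => [w _|y _]; [exact: enum_valK | exact: enum_rankK].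
by apply: eq_bigr => w _; case: (enum_val w).
Qed.

Lemma ABn z0 w0 a b i j i' j' : gen z0 -> gen w0 -> gen (z0 * w0) ->
  (i <= a)%N -> (j <= b)%N -> (i' <= a)%N -> (j' <= b)%N ->
  \sum_(k < a.+1) \sum_(l < b.+1) An z0 w0 i j k l * Bn z0 w0 k l i' j'
  = ((i == i') && (j == j'))%:R.
Proof.
move=> gz gw gzw ha hb ha' hb'.
pose T := ('I_a.+1 * 'I_b.+1)%type.
pose ev (u : 'I_#|{: T}|) : T := enum_val u.
pose A : 'M[F]_#|{: T}| := \matrix_(u, v)
  An z0 w0 (ev u).1 (ev u).2 (ev v).1 (ev v).2.
pose B : 'M[F]_#|{: T}| := \matrix_(u, v)
  Bn z0 w0 (ev u).1 (ev u).2 (ev v).1 (ev v).2.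
have BA : B *m A = 1%:M.
  apply/matrixP => u v; rewrite !mxE.
  under eq_bigr do rewrite !mxE.
  rewrite (sum_enum (fun y : T => Bn z0 w0 (ev u).1 (ev u).2 y.1 y.2
       * An z0 w0 y.1 y.2 (ev v).1 (ev v).2)) /=.
  have h1 : ((ev u).1 <= a)%N by rewrite -ltnS.
  have h2 : ((ev u).2 <= b)%N by rewrite -ltnS.
  rewrite (BAn _ _ gz gw gzw h1 h2).
  rewrite -(inj_eq enum_val_inj) /ev; congr ((nat_of_bool _)%:R).
have AB := mulmx1C BA.
have hi : (i < a.+1)%N by []. have hj : (j < b.+1)%N by [].
have hi' : (i' < a.+1)%N by []. have hj' : (j' < b.+1)%N by [].
pose r := enum_rank ((Ordinal hi, Ordinal hj) : T).
pose r' := enum_rank ((Ordinal hi', Ordinal hj') : T).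
rewrite -(sum_enum (fun y : T => An z0 w0 i j y.1 y.2 * Bn z0 w0 y.1 y.2 i' j')).
have e : (i == i') && (j == j') = (r == r') by rewrite /r /r' (inj_eq enum_rank_inj) xpair_eqE.
rewrite e.
have := congr1 (fun M : 'M[F]_#|{: T}| => M r r') AB.
rewrite /= [in X in _ = X -> _]mxE => <-.
rewrite mxE; apply: eq_bigr => w _; rewrite /A /B !mxE /ev /r /r' !enum_rankK.
by [].
Qed.


End Q.

Unset Implicit Arguments.
Set Strict Implicit.

Theorem proposition4p1 (F : fieldType) (z w q : F)
    (hq0 : q != 0)
    (hq : forall k : nat, (0 < k)%N -> q ^+ k != 1)
    (hz : forall j : int, z * q ^ j != 1)
    (hw : forall j : int, w * q ^ j != 1)
    (hzw : forall j : int, z * w * q ^ j != 1)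
    (n m N M : int) (hnN : N <= n) (hmM : M <= m) :
  zsum N n (fun r => zsum M m (fun s =>
      q ^ (n + m - r - s)
      * Phi (n - r) (m - s) (z * q ^ (2 * r - s)) (w * q ^ (2 * s - r)) q
      * Phi (r - N) (s - M) (z * q ^ (2 * r - s)) (w * q ^ (2 * s - r)) q^-1))
  = (n == N)%:R * (m == M)%:R.
Proof.
set a := `|n - N|%N; set b := `|m - M|%N.
have en : n = N + a%:Z by rewrite /a; lia.
have em : m = M + b%:Z by rewrite /b; lia.
set z0 := z * q ^ (2 * N - M); set w0 := w * q ^ (2 * M - N).
have gz : gen q z0 by apply: gen_shift.
have gw : gen q w0 by apply: gen_shift.
have gzw : gen q (z0 * w0) by rewrite /z0 /w0 qmulxy //; apply: gen_shift.
rewrite /zsum hnN hmM -/a -/b.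
have -> : (n == N)%:R * (m == M)%:R = ((a == 0%N) && (b == 0%N))%:R :> F.
  have e1 : (n == N) = (a == 0%N) by apply/eqP/eqP; rewrite /a; lia.
  have e2 : (m == M) = (b == 0%N) by apply/eqP/eqP; rewrite /b; lia.
  by rewrite -natrM mulnb e1 e2.
rewrite -(ABn hq0 hq gz gw gzw (leqnn a) (leqnn b) (leq0n a) (leq0n b)).
apply: eq_bigr => k _; apply: eq_bigr => l _.
rewrite /An /Bn; congr (q ^ _ * Phi _ _ _ _ _ * Phi _ _ _ _ _).
- lia.
- lia.
- lia.
- by rewrite /z0 qmul //; congr (_ * q ^ _); lia.
- by rewrite /w0 qmul //; congr (_ * q ^ _); lia.
- lia.
- lia.
- by rewrite /z0 qmul //; congr (_ * q ^ _); lia.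
- by rewrite /w0 qmul //; congr (_ * q ^ _); lia.
Qed.
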